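(* Let $n\ge 3$ and $d=\lfloor n/2\rfloor$. For $x\in Gr^{>0}(2,n)$ with spanning matrix $X$ having all $\Delta_{i,j}(X)>0$ ($i<j$), define $L(x)=D_d/D_1$. Then (1) $L(x)\le E(x)$, and (2) for the cyclic matrix $C$, $E([C])=L([C])=\sin(d\pi/n)/\sin(\pi/n)$.
   Context: For a real $2\times n$ matrix $X$ and $1\le i<j\le n$, $\Delta_{i,j}(X)$ is the determinant of the $2\times2$ submatrix of columns $i,j$. $Gr^{>0}(2,n)$ is the set of 2-dimensional subspaces of $\mathbb{R}^n$ having a spanning $2\times n$ matrix with all $\Delta_{i,j}>0$ ($i<j$); $E(x)=\max_{i<j}\Delta_{i,j}(X)/\min_{i<j}\Delta_{i,j}(X)$. Let $\sigma$ act on strictly increasing pairs by $\sigma(i,j)=(i+1,j+1)$ if $j<n$ and $\sigma(i,n)=(1,i+1)$; $O_k=\{\sigma^m(1,k+1):m=0,\dots,n-1\}$ and $D_k=\left(\prod_{m=0}^{n-1}\Delta_{\sigma^m(1,k+1)}(X)\right)^{1/n}$ for $k\in\{1,\dots,n-1\}$ (the ratio $D_d/D_1$ does not depend on the choice of $X$). The cyclic matrix $C$ has $m$-th column $(\cos((m-1)\pi/n),\sin((m-1)\pi/n))^T$. *)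

(* Defs.v *)
From HB Require Import structures.
From mathcomp Require Import all_boot all_order all_algebra.
From mathcomp Require Import all_classical all_reals all_analysis.
Set Implicit Arguments. Unset Strict Implicit. Unset Printing Implicit Defensive.
Import Order.TTheory GRing.Theory Num.Theory.
Local Open Scope ring_scope.

Section Defs.
Variable R : realType.

(* Columns are 0-based ordinals 'I_n; paper index m corresponds to ordinal m-1. *)
Definition Delta n (X : 'M[R]_(2, n)) (i j : 'I_n) : R :=
  X 0 i * X 1 j - X 0 j * X 1 i.

(* Delta with 1-based nat indices (paper convention); 0 outside 1..n. *)
Definition DeltaN n (X : 'M[R]_(2, n)) (i j : nat) : R :=
  match (insub i.-1 : option 'I_n), (insub j.-1 : option 'I_n) with
  | Some a, Some b => Delta X a b
  | _, _ => 0
  end.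

(* max over i<j of Delta; all values positive under the hypotheses, so 0 is a
   harmless identity when n >= 2. *)
Definition Dmax n (X : 'M[R]_(2, n)) : R :=
  \big[Num.max/0]_(i : 'I_n) \big[Num.max/0]_(j : 'I_n | (i < j)%N) Delta X i j.

(* min over i<j of Delta; Dmax is an upper bound of all terms, so it is a
   harmless identity for min. *)
Definition Dmin n (X : 'M[R]_(2, n)) : R :=
  \big[Num.min/Dmax X]_(i : 'I_n) \big[Num.min/Dmax X]_(j : 'I_n | (i < j)%N) Delta X i j.

Definition E n (X : 'M[R]_(2, n)) : R := Dmax X / Dmin X.

(* sigma on 1-based strictly increasing pairs *)
Definition sigma (n : nat) (p : nat * nat) : nat * nat :=
  if (p.2 < n)%N then (p.1.+1, p.2.+1) else (1%N, p.1.+1).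

Definition Dk n (X : 'M[R]_(2, n)) (k : nat) : R :=
  powR (\prod_(m < n) DeltaN X (iter m (sigma n) (1%N, k.+1)).1
                                (iter m (sigma n) (1%N, k.+1)).2)
       (n%:R^-1).

Definition L n (X : 'M[R]_(2, n)) : R := Dk X n./2 / Dk X 1.

(* cyclic matrix: column m (1-based) is (cos((m-1)pi/n), sin((m-1)pi/n)) *)
Definition Cyc n : 'M[R]_(2, n) :=
  \matrix_(r < 2, m < n)
    (if r == 0 then cos ((m : nat)%:R * pi / n%:R) else sin ((m : nat)%:R * pi / n%:R)).

End Defs.

(* Main.v *)
Require Import Defs.
From HB Require Import structures.
From mathcomp Require Import all_boot all_order all_algebra.
From mathcomp Require Import all_classical all_reals all_analysis.
From mathcomp Require Import zify ring lra.
Import Order.TTheory GRing.Theory Num.Theory.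
Local Open Scope ring_scope.
Set Implicit Arguments. Unset Strict Implicit.

Section Aux.
Variable R : realType.

Lemma bigmax_le_seq (I : Type) (r : seq I) (P : pred I) (F : I -> R) x0 s :
  x0 <= s -> (forall i, P i -> F i <= s) -> \big[Num.max/x0]_(i <- r | P i) F i <= s.
Proof.
move=> h0 hF; elim: r => [|a r IH]; first by rewrite big_nil.
rewrite big_cons; case: ifP => // Pa; by rewrite ge_max hF.
Qed.

Lemma le_bigmax_seq (I : eqType) (r : seq I) (P : pred I) (F : I -> R) x0 i :
  i \in r -> P i -> F i <= \big[Num.max/x0]_(j <- r | P j) F j.
Proof.
move=> + Pi; elim: r => [|a r IH] //; rewrite inE big_cons => /orP[/eqP <-|ir].
  by rewrite Pi le_max lexx.
by case: ifP => _; rewrite ?le_max IH ?orbT.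
Qed.

Lemma bigmin_ge_seq (I : Type) (r : seq I) (P : pred I) (F : I -> R) x0 s :
  s <= x0 -> (forall i, P i -> s <= F i) -> s <= \big[Num.min/x0]_(i <- r | P i) F i.
Proof.
move=> h0 hF; elim: r => [|a r IH]; first by rewrite big_nil.
rewrite big_cons; case: ifP => // Pa; by rewrite le_min hF.
Qed.

Lemma ge_bigmin_seq (I : eqType) (r : seq I) (P : pred I) (F : I -> R) x0 i :
  i \in r -> P i -> \big[Num.min/x0]_(j <- r | P j) F j <= F i.
Proof.
move=> + Pi; elim: r => [|a r IH] //; rewrite inE big_cons => /orP[/eqP <-|ir].
  by rewrite Pi ge_min lexx.
by case: ifP => _; rewrite ?ge_min IH ?orbT.
Qed.

Lemma Dmax_le n (X : 'M[R]_(2, n)) s : 0 <= s ->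
  (forall i j : 'I_n, (i < j)%N -> Delta X i j <= s) -> Dmax X <= s.
Proof.
move=> s0 h; apply: bigmax_le_seq => // i _; apply: bigmax_le_seq => // j; exact: h.
Qed.

Lemma le_Dmax n (X : 'M[R]_(2, n)) (i j : 'I_n) : (i < j)%N -> Delta X i j <= Dmax X.
Proof.
move=> ij; rewrite /Dmax.
have h1 := @le_bigmax_seq _ (index_enum 'I_n) (fun j : 'I_n => (i < j)%N) (fun j => Delta X i j) 0 j (mem_index_enum j) ij.
apply: le_trans h1 _.
have h2 := (@le_bigmax_seq _ (index_enum 'I_n) (fun _ => true) (fun i : 'I_n => \big[Num.max/0]_(j : 'I_n | (i < j)%N) Delta X i j) 0 i (mem_index_enum i) isT). exact h2.
Qed.

Lemma Dmin_ge n (X : 'M[R]_(2, n)) s : s <= Dmax X ->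
  (forall i j : 'I_n, (i < j)%N -> s <= Delta X i j) -> s <= Dmin X.
Proof.
move=> s0 h; apply: bigmin_ge_seq => // i _; apply: bigmin_ge_seq => // j; exact: h.
Qed.

Lemma ge_Dmin n (X : 'M[R]_(2, n)) (i j : 'I_n) : (i < j)%N -> Dmin X <= Delta X i j.
Proof.
move=> ij; rewrite /Dmin.
have h1 := @ge_bigmin_seq _ (index_enum 'I_n) (fun j : 'I_n => (i < j)%N) (fun j => Delta X i j) (Dmax X) j (mem_index_enum j) ij.
apply: le_trans _ h1.
exact: (@ge_bigmin_seq _ (index_enum 'I_n) (fun _ => true) (fun i : 'I_n => \big[Num.min/Dmax X]_(j : 'I_n | (i < j)%N) Delta X i j) (Dmax X) i (mem_index_enum i) isT).
Qed.

Definition orb n k m := iter m (sigma n) (1%N, k.+1).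

Lemma orb_inv n k m : (1 <= k < n)%N ->
  [/\ (1 <= (orb n k m).1)%N, ((orb n k m).1 < (orb n k m).2)%N, ((orb n k m).2 <= n)%N &
      (((orb n k m).2 - (orb n k m).1 = k)%N \/ ((orb n k m).2 - (orb n k m).1 = n - k)%N)].
Proof.
move=> /andP[hk1 hk2]; elim: m => [|m IH]; first by rewrite /orb /=; split; lia.
have -> : orb n k m.+1 = sigma n (orb n k m) by [].
rewrite /sigma.
move: IH; case: (orb n k m) => a b /= [h1 h2 h3 h4].
case: ifP => hb /=; split; lia.
Qed.

Lemma DeltaN_ex n (X : 'M[R]_(2, n)) i j : (1 <= i)%N -> (i < j)%N -> (j <= n)%N ->
  exists a b : 'I_n, [/\ (a < b)%N, (b - a = j - i)%N & DeltaN X i j = Delta X a b].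
Proof.
move=> h1 h2 h3; rewrite /DeltaN.
case: insubP => [a _ Ea|]; last by move/negP; case; lia.
case: insubP => [b _ Eb|]; last by move/negP; case; lia.
exists a, b; split => //; rewrite Ea Eb; lia.
Qed.

Lemma Dk_bounds n (X : 'M[R]_(2, n)) k lo hi : (0 < n)%N -> 0 <= lo ->
  (forall m, lo <= DeltaN X (orb n k m).1 (orb n k m).2 <= hi) ->
  lo <= Dk X k <= hi.
Proof.
move=> n0 lo0 h.
have hi0 : 0 <= hi by case/andP: (h 0%N) => a b; apply: le_trans b; exact: le_trans a.
have key : forall x : R, 0 <= x -> powR (x ^+ n) (n%:R^-1) = x.
  move=> x x0; rewrite -powR_mulrn // -powRrM mulfV ?powRr1 //.
  by rewrite pnatr_eq0 -lt0n.
have hn : 0 <= (n%:R : R)^-1 by rewrite invr_ge0.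
have P0 : 0 <= \prod_(m < n) DeltaN X (orb n k m).1 (orb n k m).2.
  by apply: prodr_ge0 => m _; case/andP: (h m) => a _; exact: le_trans a.
rewrite /Dk -/(orb n k _); apply/andP; split.
- rewrite -{1}(key lo) //; apply: ge0_ler_powR => //; rewrite ?nnegrE ?exprn_ge0 //.
  have -> : lo ^+ n = \prod_(m < n) lo by rewrite prodr_const card_ord.
  apply: ler_prod => m _.
  by rewrite lo0; case/andP: (h m).
- rewrite -{1}(key hi) //; apply: ge0_ler_powR => //; rewrite ?nnegrE ?exprn_ge0 //.
  have -> : hi ^+ n = \prod_(m < n) hi by rewrite prodr_const card_ord.
  apply: ler_prod => m _.
  case/andP: (h m) => a b; rewrite b andbT; exact: le_trans a.
Qed.

Lemma my_sin_pi_sub (x : R) : sin (pi - x) = sin x.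
Proof. by rewrite sinB sinpi cospi mul0r sub0r mulN1r opprK. Qed.

Lemma my_ler_sin (x y : R) : 0 <= x -> x <= y -> y <= pi / 2 -> sin x <= sin y.
Proof.
move=> x0 xy ypi.
have pi0 : 0 < pi :> R := pi_gt0 R.
set a := (x + y) / 2; set b := (y - x) / 2.
have -> : y = a + b by rewrite /a /b; field.
have -> : x = a - b by rewrite /a /b; field.
rewrite sinD sinN cosN mulrN sinD.
have ca : 0 <= cos a by apply: cos_ge0_pihalf; apply/andP; split; rewrite /a; lra.
have sb : 0 <= sin b by apply: sin_ge0_pi; apply/andP; split; rewrite /b; lra.
have := mulr_ge0 ca sb; lra.
Qed.

Lemma bigmin_gt_seq (I : Type) (r : seq I) (P : pred I) (F : I -> R) x0 s :
  s < x0 -> (forall i, P i -> s < F i) -> s < \big[Num.min/x0]_(i <- r | P i) F i.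
Proof.
move=> h0 hF; elim: r => [|a r IH]; first by rewrite big_nil.
rewrite big_cons; case: ifP => // Pa; by rewrite lt_min hF.
Qed.

Lemma Dmin_gt0 n (X : 'M[R]_(2, n)) : 0 < Dmax X ->
  (forall i j : 'I_n, (i < j)%N -> 0 < Delta X i j) -> 0 < Dmin X.
Proof.
move=> s0 h; apply: bigmin_gt_seq => // i _; apply: bigmin_gt_seq => // j; exact: h.
Qed.

Definition sn n k : R := sin (k%:R * pi / n%:R).

Lemma DeltaCyc n (a b : 'I_n) : (a <= b)%N ->
  Delta (Cyc R n) a b = sn n (b - a).
Proof.
move=> ab; rewrite /Delta /sn !mxE /= natrB // !mulrBl sinB; ring.
Qed.

Lemma sn_sym n k : (0 < n)%N -> (k <= n)%N -> sn n (n - k) = sn n k.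
Proof.
move=> n0 kn; rewrite /sn natrB // !mulrBl mulrAC divff ?mul1r ?my_sin_pi_sub //.
by rewrite pnatr_eq0 -lt0n.
Qed.

Lemma sn_mono n j k : (j <= k)%N -> j%:R * pi / n%:R <= k%:R * pi / (n%:R : R).
Proof.
move=> jk; rewrite ler_wpM2r ?invr_ge0 ?ler0n // ler_wpM2r ?ler_nat //.
exact: ltW (pi_gt0 R).
Qed.

Lemma sn_half n k : (0 < n)%N -> (k.*2 <= n)%N -> k%:R * pi / n%:R <= pi / (2 : R).
Proof.
move=> n0 kn.
have pi0 : 0 < pi :> R := pi_gt0 R.
have hk : (k%:R * 2 <= n%:R :> R) by rewrite -natrM ler_nat muln2.
have np : (0 : R) < n%:R by rewrite ltr0n.
rewrite ler_pdivrMr //; nra.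
Qed.

Lemma sn_bounds n k : (3 <= n)%N -> (1 <= k)%N -> (k < n)%N ->
  sn n 1 <= sn n k <= sn n n./2.
Proof.
move=> n3 k1 kn.
have n0 : (0 < n)%N by lia.
have hd : ((n./2).*2 <= n)%N /\ (n <= (n./2).*2.+1)%N.
  by have := odd_double_half n; case: (odd n) => /= <-; split; lia.
case: hd => hd1 hd2.
wlog kd : k k1 kn / (k <= n./2)%N.
  move=> W; case: (leqP k n./2) => kd; first exact: W.
  rewrite -(@sn_sym n k n0 (ltnW kn)); apply: W; lia.
have p0 : 0 <= 1%:R * pi / (n%:R : R).
  by rewrite mul1r divr_ge0 ?ler0n // ltW // pi_gt0.
apply/andP; split.
- apply: my_ler_sin => //; first exact: sn_mono.
  by apply: sn_half => //; lia.
- apply: my_ler_sin; [|exact: sn_mono|by apply: sn_half].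
  exact: le_trans p0 (@sn_mono n 1 k k1).
Qed.

Lemma sn1_gt0 n : (3 <= n)%N -> 0 < sn n 1.
Proof.
move=> n3; rewrite /sn mul1r; apply: sin_gt0_pi.
have pi0 : 0 < pi :> R := pi_gt0 R.
have np : (1 : R) < n%:R by rewrite ltr1n; lia.
apply/andP; split; first by rewrite divr_gt0 // (lt_trans _ np).
by rewrite ltr_pdivrMr ?(lt_trans _ np) //; nra.
Qed.

Lemma Dk_Cyc n k : (3 <= n)%N -> (1 <= k < n)%N -> Dk (Cyc R n) k = sn n k.
Proof.
move=> n3 hk.
have n0 : (0 < n)%N by lia.
have s0 : 0 <= sn n k.
  case/andP: hk => k1 kn; case/andP: (sn_bounds n3 k1 kn) => + _.
  by apply: le_trans; apply: ltW; apply: sn1_gt0.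
suff /andP[h1 h2] : sn n k <= Dk (Cyc R n) k <= sn n k by apply/le_anti/andP.
apply: Dk_bounds => // m.
case: (orb_inv m hk) => h1 h2 h3 h4.
have [a [b [ab eab ->]]] := DeltaN_ex (Cyc R n) h1 h2 h3.
rewrite DeltaCyc ?(ltnW ab) // eab.
case: h4 => ->; first by rewrite lexx.
by rewrite sn_sym ?lexx //; case/andP: hk => _ /ltnW.
Qed.

End Aux.
Unset Implicit Arguments.

Theorem mainTheorem8 (R : realType) (n : nat) (hn : (3 <= n)%N) :
  (forall X : 'M[R]_(2, n),
      (forall i j : 'I_n, (i < j)%N -> 0 < Delta X i j) ->
      L X <= E X) /\
  (E (Cyc R n) = L (Cyc R n) /\
   L (Cyc R n) = sin ((n./2)%:R * pi / n%:R) / sin (pi / n%:R)).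
Proof.
have n0 : (0 < n)%N by lia.
have hd : ((n./2).*2 <= n)%N /\ (n <= (n./2).*2.+1)%N.
  by have := odd_double_half n; case: (odd n) => /= <-; split; lia.
case: hd => hd1 hd2.
have hkd : (1 <= n./2 < n)%N by lia.
have hk1 : (1 <= 1 < n)%N by lia.
pose i0 : 'I_n := Ordinal n0.
have i1lt : (1 < n)%N by lia.
pose i1 : 'I_n := Ordinal i1lt.
have idlt : (n./2 < n)%N by lia.
pose id : 'I_n := Ordinal idlt.
split.
  move=> X hpos.
  have dmax0 : 0 < Dmax X.
    by apply: lt_le_trans (hpos i0 i1 isT) _; apply: le_Dmax.
  have dmin0 : 0 < Dmin X by apply: Dmin_gt0.
  have bnd : forall k, (1 <= k < n)%N -> Dmin X <= Dk X k <= Dmax X.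
    move=> k hk; apply: Dk_bounds => //; first exact: ltW.
    move=> m; case: (orb_inv m hk) => h1 h2 h3 h4.
    have [a [b [ab eab ->]]] := DeltaN_ex X h1 h2 h3.
    by rewrite ge_Dmin // le_Dmax.
  case/andP: (bnd _ hkd) => hd0 hd3.
  case/andP: (bnd _ hk1) => h10 h13.
  have h1p : 0 < Dk X 1 by apply: lt_le_trans h10.
  rewrite /L /E; apply: ler_pM => //.
  - exact: le_trans (ltW dmin0) hd0.
  - by rewrite invr_ge0 ltW.
  - by rewrite lef_pV2 ?posrE.
have s1 := @sn1_gt0 R n hn.
have sb := fun k => @sn_bounds R n k hn.
have sdge : sn R n 1 <= sn R n n./2 by case/andP: (sb _ (isT : (1 <= 1)%N) i1lt) => _.
have Dmx : Dmax (Cyc R n) = sn R n n./2.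
  apply/le_anti/andP; split.
    apply: Dmax_le; first exact: le_trans (ltW s1) sdge.
    move=> i j ij; have jn := ltn_ord j; rewrite DeltaCyc ?(ltnW ij) //.
    by case/andP: (sb (j - i)%N ltac:(lia) ltac:(lia)).
  have := @le_Dmax R n (Cyc R n) i0 id ltac:(rewrite /= ; lia).
  by rewrite DeltaCyc //= subn0.
have Dmn : Dmin (Cyc R n) = sn R n 1.
  apply/le_anti/andP; split.
    have := @ge_Dmin R n (Cyc R n) i0 i1 isT.
    by rewrite DeltaCyc.
  apply: Dmin_ge; first by rewrite Dmx.
  move=> i j ij; have jn := ltn_ord j; rewrite DeltaCyc ?(ltnW ij) //.
  by case/andP: (sb (j - i)%N ltac:(lia) ltac:(lia)).
have LC : L (Cyc R n) = sn R n n./2 / sn R n 1 by rewrite /L !Dk_Cyc.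
split; first by rewrite /E Dmx Dmn LC.
by rewrite LC /sn mul1r.
Qed.
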